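(* Let $N\ge 1$ and let $f:\{0,1\}^N\to\{-1,1\}$ be a Boolean function. Let $0\le\epsilon$ and suppose a quantum query (black-box) algorithm computes $f$ with error probability at most $\epsilon$ using $T$ queries. Then $$T\;\ge\;\frac{1-2\sqrt{\epsilon}}{2}\,\rho_f\,N\;=\;\frac{1-2\sqrt{\epsilon}}{2}\,\bar S_f .$$
   Context: Quantum query model: the input $x=(x_0,\dots,x_{N-1})\in\{0,1\}^N$ is accessible only through an oracle. The algorithm works in a Hilbert space with basis states $|i\rangle_I|a\rangle_A|w\rangle_W|r\rangle_R$ (index register $i\in\{0,\dots,N-1\}$, one-bit answer register $a$, a working register $w$ of fixed size, and a one-bit result register $r$). An algorithm with $T$ queries is a sequence $U_0, O_x, U_1, O_x,\dots,O_x,U_T$ of unitaries, where the $U_j$ are arbitrary unitaries independent of $x$ and the query gate is $O_x:|i\rangle|a\rangle|w\rangle|r\rangle\mapsto|i\rangle|a\oplus x_i\rangle|w\rangle|r\rangle$. It starts from a fixed basis state, and at the end the result register is measured. It computes $f$ with error probability at most $\epsilon$ if for every $x\in\{0,1\}^N$ the measured result equals $f(x)$ with probability at least $1-\epsilon$. For $x\in\{0,1\}^N$, $e_i$ is the string with a single $1$ in position $i$ and $+$ is bitwise XOR. The influence of variable $i$ is $\mathrm{Inf}_i(f)=\Pr_x[f(x)\ne f(x+e_i)]$ with $x$ uniform in $\{0,1\}^N$; the average influence is $\rho_f=\frac1N\sum_{i=0}^{N-1}\mathrm{Inf}_i(f)$. The sensitivity of $f$ at $x$ is $S_f(x)=|\{i: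 f(x)\ne f(x+e_i)\}|$, and the average sensitivity is $\bar S_f=E_x[S_f(x)]$ for uniform $x$ (so $\bar S_f=\rho_f N$). *)

(* Defs.v *)
From HB Require Import structures.
From mathcomp Require Import all_boot all_order all_algebra.
From mathcomp Require Import reals complex.
Set Implicit Arguments. Unset Strict Implicit. Unset Printing Implicit Defensive.
Import Order.TTheory GRing.Theory Num.Theory.
Local Open Scope ring_scope.

Definition input (N : nat) := {ffun 'I_N -> bool}.

Definition flip (N : nat) (x : input N) (i : 'I_N) : input N :=
  [ffun j => x j (+) (j == i)].

(* Basis states |i>_I |a>_A |w>_W |r>_R. *)
Definition basis (N : nat) (W : finType) := ('I_N * bool * W * bool)%type.

Section Quantum.
Variables (R : realType) (N : nat) (W : finType).
Local Notation B := (basis N W).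
Local Notation C := (R[i]).

Definition qstate := B -> C.
Definition qop := B -> B -> C.

Definition qapply (U : qop) (v : qstate) : qstate :=
  fun s => \sum_(t : B) U s t * v t.

(* U^* U = 1 (on a finite-dimensional space this is unitarity) *)
Definition unitary (U : qop) : Prop :=
  forall s s' : B, \sum_(t : B) conjc (U t s) * U t s' = (s == s')%:R.

Definition basis_state (s0 : B) : qstate := fun s => (s == s0)%:R.

Definition oracle_map (x : input N) (s : B) : B :=
  let: (i, a, w, r) := s in (i, a (+) x i, w, r).

Definition oracle (x : input N) : qop :=
  fun s t => (s == oracle_map x t)%:R.

Record algorithm (T : nat) := Algorithm {
  alg_U : 'I_T.+1 -> qop;
  alg_unitary : forall j, unitary (alg_U j);
  alg_start : B
}.

Fixpoint run (T : nat) (A : algorithm T) (x : input N) (k : nat) : qstate :=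
  match k with
  | 0 => qapply (alg_U A (inord 0)) (basis_state (alg_start A))
  | k'.+1 => qapply (alg_U A (inord k)) (qapply (oracle x) (run A x k'))
  end.

Definition final_state (T : nat) (A : algorithm T) (x : input N) : qstate :=
  run A x T.

Definition sqnorm (z : C) : R := (complex.Re z) ^+ 2 + (complex.Im z) ^+ 2.

Definition prob_result (psi : qstate) (b : bool) : R :=
  \sum_(s : B | s.2 == b) sqnorm (psi s).

(* Boolean functions with values in {-1,1}; result bit r encodes (-1)^r,
   i.e. r = true  <->  value -1. *)
Definition bit_of_pm1 (v : int) : bool := v == -1.

Definition computes_with_error (T : nat) (A : algorithm T)
    (f : input N -> int) (eps : R) : Prop :=
  forall x : input N, 1 - eps <= prob_result (final_state A x) (bit_of_pm1 (f x)).

End Quantum.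

Section Influence.
Variables (R : realType) (N : nat).

Definition influence (f : input N -> int) (i : 'I_N) : R :=
  (#|[pred x : input N | f x != f (flip x i)]|)%:R / (#|{: input N}|)%:R.

Definition avg_influence (f : input N -> int) : R :=
  (\sum_(i < N) influence f i) / N%:R.

Definition sensitivity (f : input N -> int) (x : input N) : nat :=
  #|[pred i : 'I_N | f x != f (flip x i)]|.

Definition avg_sensitivity (f : input N -> int) : R :=
  (\sum_(x : input N) (sensitivity f x)%:R) / (#|{: input N}|)%:R.

End Influence.

(* Main.v *)
Require Import Defs.
From HB Require Import structures.
From mathcomp Require Import all_boot all_order all_algebra.
From mathcomp Require Import reals complex.
From mathcomp Require Import ring lra.
Set Implicit Arguments. Unset Strict Implicit. Unset Printing Implicit Defensive.
Import Order.TTheory GRing.Theory Num.Theory.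
Local Open Scope ring_scope.

Section Q.
Variables (R : realType) (N : nat) (W : finType).
Local Notation B := (basis N W).
Local Notation C := (R[i]).

Lemma sqnormE (z : C) : real_complex R (sqnorm z) = conjc z * z.
Proof.
case: z => a b; rewrite /sqnorm /=; apply/eqP; rewrite eq_complex /=.
apply/andP; split; apply/eqP; ring.
Qed.

Lemma sqnorm_ge0 (z : C) : 0 <= sqnorm z.
Proof. rewrite /sqnorm; apply: addr_ge0; apply: sqr_ge0. Qed.

Definition nrm (w : qstate R N W) : R := \sum_s sqnorm (w s).

Lemma nrmC w : real_complex R (nrm w) = \sum_s conjc (w s) * w s.
Proof. rewrite /nrm rmorph_sum; apply: eq_bigr => s _; exact: sqnormE. Qed.

Lemma eq_nrm v w : (forall s, v s = w s) -> nrm v = nrm w.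
Proof. by move=> h; apply: eq_bigr => s _; rewrite h. Qed.

Lemma unitary_nrm U w : unitary U -> nrm (qapply U w) = nrm w.
Proof.
move=> hU; apply: complexI; rewrite !nrmC /qapply.
under eq_bigr => s _ do rewrite rmorph_sum mulr_suml.
under eq_bigr => s _ do under eq_bigr => t _ do rewrite mulr_sumr.
rewrite exchange_big /=.
apply: eq_bigr => t _.
rewrite exchange_big /=.
transitivity (\sum_t' (conjc (w t) * w t') * (t == t')%:R).
  apply: eq_bigr => t' _.
  rewrite -(hU t t') mulr_sumr; apply: eq_bigr => s _.
  rewrite rmorphM /=; ring.
rewrite (bigD1 t) //= eqxx mulr1 big1 ?addr0 // => t' /negPf.
by rewrite eq_sym => ->; rewrite mulr0.
Qed.

Lemma om_invol (x : input N) (s : B) : oracle_map x (oracle_map x s) = s.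
Proof. by case: s => [[[i a] w] r] /=; rewrite -addbA addbb addbF. Qed.

Lemma om_inj (x : input N) : injective (@oracle_map N W x).
Proof. exact: can_inj (om_invol x). Qed.

Lemma qapply_oracle (x : input N) (w : qstate R N W) (s : B) : qapply (oracle R x) w s = w (oracle_map x s).
Proof.
rewrite /qapply /oracle (bigD1 (oracle_map x s)) //= om_invol eqxx mul1r big1 ?addr0 //.
move=> t ht; case: eqP => [e|]; last by rewrite mul0r.
by move: ht; rewrite e om_invol eqxx.
Qed.

Lemma om_flip (x : input N) j (s : B) : j != s.1.1.1 -> oracle_map (flip x j) s = oracle_map x s.
Proof.
case: s => [[[i a] w] r] /= hj; rewrite /flip ffunE.
by rewrite eq_sym (negPf hj) addbF.
Qed.

Lemma flip_invol (x : input N) j : flip (flip x j) j = x.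
Proof. by apply/ffunP => i; rewrite !ffunE -addbA addbb addbF. Qed.

Lemma flip_inj (j : 'I_N) : injective (fun x => flip x j).
Proof. by move=> x y e; rewrite -(flip_invol x j) -(flip_invol y j) e. Qed.

Lemma sqnorm_sub_le (a b : C) : sqnorm (a - b) <= 2 * sqnorm a + 2 * sqnorm b.
Proof.
case: a => a1 a2; case: b => b1 b2; rewrite /sqnorm /=.
have h1 := sqr_ge0 (a1 + b1); have h2 := sqr_ge0 (a2 + b2).
rewrite -subr_ge0; apply: le_trans (addr_ge0 h1 h2) _; rewrite le_eqVlt; apply/orP; left; apply/eqP; ring.
Qed.

Lemma qapplyB U (v w : qstate R N W) s :
  qapply U v s - qapply U w s = qapply U (fun t => v t - w t) s.
Proof. by rewrite /qapply -sumrB; apply: eq_bigr => t _; rewrite mulrBr. Qed.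

Lemma nrm_ge0 w : 0 <= nrm w.
Proof. by apply: sumr_ge0 => s _; apply: sqnorm_ge0. Qed.

Lemma nrm_oracle (x : input N) (w : qstate R N W) : nrm (qapply (oracle R x) w) = nrm w.
Proof.
rewrite /nrm (reindex_inj (@om_inj x)) /=; apply: eq_bigr => s _.
by rewrite qapply_oracle om_invol.
Qed.

Definition D (v : input N -> qstate R N W) : R :=
  \sum_x \sum_(j < N) nrm (fun s => v x s - v (flip x j) s).
Definition M (v : input N -> qstate R N W) : R := \sum_x nrm (v x).

Lemma D_unitary U v : unitary U -> D (fun x => qapply U (v x)) = D v.
Proof.
move=> hU; apply: eq_bigr => x _; apply: eq_bigr => j _.
rewrite -[RHS](unitary_nrm _ hU); apply: eq_nrm => s; exact: qapplyB.
Qed.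


Lemma sum_ind (F : 'I_N -> R) i : \sum_j (j == i)%:R * F j = F i.
Proof.
rewrite (bigD1 i) //= eqxx mul1r big1 ?addr0 // => j /negPf ->; by rewrite mul0r.
Qed.

Lemma eqle (x y : R) : x = y -> x <= y. Proof. by move->. Qed.

Lemma D_oracle v : D (fun x => qapply (oracle R x) (v x)) <= D v + 4 * M v.
Proof.
pose G x j s := sqnorm (v x s - v (flip x j) s).
pose a x s := 2 * sqnorm (v x (oracle_map x s)).
pose b x j s := 2 * sqnorm (v (flip x j) (oracle_map (flip x j) s)).
have step1 : D (fun x => qapply (oracle R x) (v x)) <=
  \sum_x \sum_j \sum_s (G x j (oracle_map x s) + (j == s.1.1.1)%:R * a x s
                        + (j == s.1.1.1)%:R * b x j s).
  apply: ler_sum => x _; apply: ler_sum => j _; apply: ler_sum => s _.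
  rewrite !qapply_oracle.
  case: (eqVneq j s.1.1.1) => hj.
    rewrite /= mulr1n !mul1r -addrA; apply: le_trans (sqnorm_sub_le _ _) _.
    by rewrite lerDr /G sqnorm_ge0.
  by rewrite /= mulr0n !mul0r !addr0 om_flip.
have eA : \sum_x \sum_j \sum_s G x j (oracle_map x s) = D v.
  rewrite /D; apply: eq_bigr => x _; apply: eq_bigr => j _.
  by rewrite /nrm (reindex_inj (@om_inj x)) /=; apply: eq_bigr => s _; rewrite om_invol.
have eB : \sum_x \sum_(j < N) \sum_s (j == s.1.1.1)%:R * a x s = 2 * M v.
  rewrite /M mulr_sumr; apply: eq_bigr => x _.
  rewrite exchange_big /= (eq_bigr (fun s => a x s)); last by move=> s _; rewrite sum_ind.
  rewrite /nrm mulr_sumr (reindex_inj (@om_inj x)) /=.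
  by apply: eq_bigr => s _; rewrite /a om_invol.
have eC : \sum_x \sum_(j < N) \sum_s (j == s.1.1.1)%:R * b x j s = 2 * M v.
  transitivity (\sum_x \sum_s b x s.1.1.1 s).
    apply: eq_bigr => x _; rewrite exchange_big /=; apply: eq_bigr => s _.
    by rewrite (sum_ind (fun j => b x j s)).
  rewrite exchange_big /= /M mulr_sumr.
  transitivity (\sum_s \sum_x 2 * sqnorm (v x (oracle_map x s))).
    apply: eq_bigr => s _; rewrite (reindex_inj (@flip_inj s.1.1.1)) /=.
    by apply: eq_bigr => x _; rewrite /b flip_invol.
  rewrite exchange_big /=; apply: eq_bigr => x _.
  rewrite /nrm mulr_sumr (reindex_inj (@om_inj x)) /=.
  by apply: eq_bigr => s _; rewrite om_invol.
apply: le_trans step1 _; apply: eqle.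
under eq_bigr => x _ do under eq_bigr => j _ do rewrite 2!big_split.
under eq_bigr => x _ do rewrite 2!big_split.
rewrite 2!big_split eA eB eC.
change (D v + 2 * M v + 2 * M v = D v + 4 * M v); ring.
Qed.


Lemma sqnorm0 : sqnorm (0 : C) = 0.
Proof. by rewrite /sqnorm /= expr0n /= addr0. Qed.

Lemma sqnorm_bool (b : bool) : sqnorm (b%:R : C) = b%:R.
Proof. by case: b; rewrite /sqnorm /= ?expr0n ?expr1n /= ?addr0. Qed.

Lemma nrm_basis (s0 : B) : nrm (basis_state R s0) = 1.
Proof.
rewrite /nrm /basis_state (bigD1 s0) //= eqxx sqnorm_bool big1 ?addr0 //.
by move=> s /negPf ->; rewrite sqnorm_bool.
Qed.

Lemma run_bound T (A : algorithm R N W T) k :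
  (forall x, nrm (run A x k) = 1) /\
  D (fun x => run A x k) <= 4 * k%:R * (#|{: input N}|)%:R.
Proof.
elim: k => [|k [IH1 IH2]].
  split => [x|] /=; first by rewrite (unitary_nrm _ (alg_unitary A _)) nrm_basis.
  rewrite mulr0n mulr0 mul0r; apply: eqle; apply: big1 => x _; apply: big1 => j _.
  by apply: big1 => s _; rewrite subrr sqnorm0.
split => [x|] /=.
  by rewrite (unitary_nrm _ (alg_unitary A _)) nrm_oracle.
rewrite (D_unitary (fun x => qapply (oracle R x) (run A x k)) (alg_unitary A _)).
apply: le_trans (D_oracle _) _.
have -> : M (fun x => run A x k) = (#|{: input N}|)%:R.
  by rewrite /M (eq_bigr (fun _ => 1)) ?sumr_const ?card_ffun // => x _; rewrite IH1.
apply: le_trans (lerD IH2 (lexx _)) _; apply: eqle; rewrite -natr1; ring.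
Qed.


Definition dot (z w : C) : R := complex.Re z * complex.Re w + complex.Im z * complex.Im w.

Lemma sqnormB (z w : C) : sqnorm (z - w) = sqnorm z + sqnorm w - 2 * dot z w.
Proof. by case: z => a b; case: w => c d; rewrite /sqnorm /dot /=; ring. Qed.

Lemma dot_am (l : R) (z w : C) : 0 < l -> 2 * dot z w <= l * sqnorm z + l^-1 * sqnorm w.
Proof.
move=> hl; case: z => a b; case: w => c d; rewrite /sqnorm /dot /=.
have hm : 0 < l^-1 by rewrite invr_gt0.
have e : l^-1 * l = 1 by rewrite mulVf // gt_eqF.
have h1 := mulr_ge0 (ltW hm) (sqr_ge0 (l * a - c)).
have h2 := mulr_ge0 (ltW hm) (sqr_ge0 (l * b - d)).
rewrite -subr_ge0; apply: le_trans (addr_ge0 h1 h2) _; apply: eqle.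
have -> : l * (a ^+ 2 + b ^+ 2) = (l^-1 * l) * l * (a ^+ 2 + b ^+ 2) by rewrite e mul1r.
have -> : 2 * (a * c + b * d) = (l^-1 * l) * 2 * (a * c + b * d) by rewrite e mul1r.
ring.
Qed.

Lemma real_bound (X u v eps : R) : 0 <= eps -> 0 <= u -> u <= 1 -> 0 <= v -> v <= eps ->
  (forall l, 0 < l -> 2 * X <= l * u + l^-1 * v) -> X <= Num.sqrt eps.
Proof.
move=> he hu0 hu1 hv0 hve H.
have [e0|epos] := eqVneq eps 0.
  rewrite e0 sqrtr0; rewrite leNgt; apply/negP => hX.
  have := H X hX; have -> : v = 0 by apply/le_anti; rewrite hv0 -e0 hve.
  rewrite mulr0 addr0 => h.
  have : X * u <= X by rewrite ler_piMr // ltW.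
  move=> h'; have := le_trans h h'; lra.
have sp : 0 < Num.sqrt eps by rewrite sqrtr_gt0 lt0r epos.
have := H _ sp.
have h1 : Num.sqrt eps * u <= Num.sqrt eps by rewrite ler_piMr // ltW.
have h2 : (Num.sqrt eps)^-1 * v <= Num.sqrt eps.
  rewrite ler_pdivrMl //; apply: le_trans hve _; rewrite -expr2 sqr_sqrtr //.
lra.
Qed.

Lemma nrm_split (w : qstate R N W) b : nrm w = prob_result w b + prob_result w (~~ b).
Proof.
rewrite /nrm /prob_result (bigID (fun s : B => s.2 == b)) /=; congr (_ + _).
by apply: eq_bigl => s; case: (s.2); case: b.
Qed.

Lemma pair_lb (psi phi : qstate R N W) b eps : 0 <= eps -> nrm psi = 1 -> nrm phi = 1 ->
  1 - eps <= prob_result psi b -> 1 - eps <= prob_result phi (~~ b) ->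
  2 - 4 * Num.sqrt eps <= nrm (fun s => psi s - phi s).
Proof.
move=> he n1 n2 p1 p2.
have e : nrm (fun s => psi s - phi s) = 2 - 2 * \sum_s dot (psi s) (phi s).
  rewrite /nrm (eq_bigr (fun s => sqnorm (psi s) + sqnorm (phi s) - 2 * dot (psi s) (phi s)));
    last by move=> s _; rewrite sqnormB.
  rewrite sumrB big_split /= -mulr_sumr; rewrite /nrm in n1 n2; rewrite n1 n2.
  by congr (_ - _).
rewrite e (bigID (fun s : B => s.2 == b)) /=.
have hs1 := nrm_split psi b; have hs2 := nrm_split phi b.
have q1 : prob_result psi b <= 1 by rewrite -n1 hs1 lerDl /prob_result sumr_ge0 // => s _; exact: sqnorm_ge0.
have q2 : prob_result phi (~~ b) <= 1 by rewrite -n2 hs2 lerDr /prob_result sumr_ge0 // => s _; exact: sqnorm_ge0.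
have g1 : 0 <= prob_result psi (~~ b) by rewrite /prob_result sumr_ge0 // => s _; exact: sqnorm_ge0.
have g2 : 0 <= prob_result phi b by rewrite /prob_result sumr_ge0 // => s _; exact: sqnorm_ge0.
have g3 : 0 <= prob_result psi b by rewrite /prob_result sumr_ge0 // => s _; exact: sqnorm_ge0.
have g4 : 0 <= prob_result phi (~~ b) by rewrite /prob_result sumr_ge0 // => s _; exact: sqnorm_ge0.
have A1 : \sum_(s | s.2 == b) dot (psi s) (phi s) <= Num.sqrt eps.
  apply: (real_bound (u := prob_result psi b) (v := prob_result phi b)) => //; first lra.
  move=> l hl; rewrite /prob_result mulr_sumr !mulr_sumr -big_split /=.
  by apply: ler_sum => s _; apply: dot_am.
have A2 : \sum_(s | s.2 != b) dot (psi s) (phi s) <= Num.sqrt eps.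
  rewrite (eq_bigl (fun s : B => s.2 == ~~ b)); last by move=> s; case: (s.2); case: (b).
  apply: (real_bound (u := prob_result phi (~~ b)) (v := prob_result psi (~~ b))) => //; first lra.
  move=> l hl; rewrite /prob_result mulr_sumr !mulr_sumr -big_split /=.
  apply: ler_sum => s _; rewrite /dot mulrC addrC.
  have := dot_am (phi s) (psi s) hl; rewrite /dot.
  have -> : complex.Re (phi s) * complex.Re (psi s) = complex.Re (psi s) * complex.Re (phi s) by rewrite mulrC.
  have -> : complex.Im (phi s) * complex.Im (psi s) = complex.Im (psi s) * complex.Im (phi s) by rewrite mulrC.
  by rewrite mulrC addrC.
lra.
Qed.

End Q.

Unset Implicit Arguments. Set Strict Implicit.

Lemma sum_card (R : realType) (T : finType) (P : pred T) :
  \sum_x ((P x)%:R : R) = (#|P|)%:R.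
Proof.
rewrite -sum1_card natr_sum [RHS]big_mkcond /=; apply: eq_bigr => x _.
by rewrite -[x \in P]/(P x); case: (P x).
Qed.

Theorem theorem3 (R : realType) (N : nat) (hN : (1 <= N)%N) (W : finType)
    (f : input N -> int) (hf : forall x, f x = 1 \/ f x = -1)
    (eps : R) (heps : 0 <= eps) (T : nat) (A : algorithm R N W T) :
  computes_with_error A f eps ->
  (1 - 2 * Num.sqrt eps) / 2 * avg_influence R f * N%:R <= T%:R /\
  (1 - 2 * Num.sqrt eps) / 2 * avg_influence R f * N%:R
    = (1 - 2 * Num.sqrt eps) / 2 * avg_sensitivity R f.
Proof.
move=> hA.
set K : R := (#|{: input N}|)%:R.
have Kpos : 0 < K by rewrite ltr0n; apply/card_gt0P; exists [ffun=> false].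
set Ssum : R := \sum_x ((sensitivity f x)%:R : R).
have eqI : avg_influence R f * N%:R = Ssum / K.
  rewrite /avg_influence -mulrA mulVf ?mulr1; last by rewrite pnatr_eq0 -lt0n.
  rewrite /influence -mulr_suml /Ssum /sensitivity; congr (_ / _).
  under eq_bigr => i _ do rewrite -sum_card.
  rewrite exchange_big /=; apply: eq_bigr => x _; by rewrite -sum_card.
have eqS : avg_sensitivity R f = Ssum / K by [].
have main : (2 - 4 * Num.sqrt eps) * Ssum <= 4 * T%:R * K.
  have [n1 hD] := run_bound A T.
  apply: le_trans hD.
  rewrite /Ssum mulr_sumr; apply: ler_sum => x _.
  rewrite /sensitivity -sum_card mulr_sumr; apply: ler_sum => j _.
  rewrite /=.
  case: (eqVneq (f x) (f (flip x j))) => hne /=.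
    by rewrite mulr0n mulr0 nrm_ge0.
  rewrite mulr1n mulr1.
  have hb : bit_of_pm1 (f (flip x j)) = ~~ bit_of_pm1 (f x).
    move: hne; case: (hf x) => ->; case: (hf (flip x j)) => -> //.
  apply: pair_lb => //; first exact: hA.
  by rewrite -hb; exact: hA.
rewrite -mulrA eqI eqS; split => //.
rewrite mulrA; have : (1 - 2 * Num.sqrt eps) / 2 * Ssum <= T%:R * K.
  have -> : (1 - 2 * Num.sqrt eps) / 2 * Ssum = (2 - 4 * Num.sqrt eps) * Ssum / 4 by field.
  by rewrite ler_pdivrMr ?ltr0n //; apply: le_trans main _; apply: eqle; ring.
by move=> h; rewrite ler_pdivrMr.
Qed.
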